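(* Let $L\subseteq\Sigma^*$ be a regular language. Then the following are equivalent: (1) $V_L(n)\in O(\log n)$; (2) $|\Sigma^{\le n}/{\approx_L}|$ is polynomially bounded in $n$; (3) the Myhill–Nerode right congruence $\sim_L$ has no critical tuple.
   Context: $\sim_L$ is the Myhill–Nerode right congruence: $x\sim_L y$ iff $\{z: xz\in L\}=\{z:yz\in L\}$. For an equivalence $\sim$ on $\Sigma^*$, its suffix expansion $\approx$ is defined by $a_1\cdots a_n\approx b_1\cdots b_m$ iff $n=m$ and $a_i\cdots a_n\sim b_i\cdots b_n$ for all $1\le i\le n$; $\approx_L$ is the suffix expansion of $\sim_L$, and $\Sigma^{\le n}/{\approx_L}$ is the set of $\approx_L$-classes of words of length at most $n$. A critical tuple in a right congruence $\sim$ is a tuple $(u_2,v_2,u,v)$ of words with $|u_2|=|v_2|\ge1$, $u=u_1u_2$ and $v=v_1v_2$ for some words $u_1,v_1$, and $u_2w\not\sim v_2w$ for all $w\in\{u,v\}^*$. $V_L(n)$ is the variable-size sliding window space complexity of $L$: with $\overline\Sigma=\Sigma\cup\{\downarrow\}$, the active window is $\mathrm{wnd}(\varepsilon)=\varepsilon$, $\mathrm{wnd}(ua)=\mathrm{wnd}(u)a$ ($a\in\Sigma$), $\mathrm{wnd}(u\downarrow)=\varepsilon$ if $\mathrm{wnd}(u)=\varepsilon$ and $=v$ if $\mathrm{wnd}(u)=av$. A variable-size sliding window algorithm for $L$ is a deterministic (possibly infinite-state) automaton over $\overline\Sigma$ whose states are bit strings, outputting after each prefix whether the current window is in $L$; its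 space complexity at $n$ is the maximal bit-string length of states reached on inputs whose window never exceeds length $n$; $V_L(n)$ is the space complexity of a space-optimal such algorithm (which exists). *)

(* Defs.v *)
From mathcomp Require Import all_boot.
From mathcomp Require Import boolp.

Set Implicit Arguments.
Unset Strict Implicit.
Unset Printing Implicit Defensive.

Section Defs.
Variable Sigma : finType.
Notation word := (seq Sigma).

Definition regular (L : pred word) : Prop :=
  exists (Q : finType) (q0 : Q) (delta : Q -> Sigma -> Q) (F : pred Q),
    forall w, L w = F (foldl delta q0 w).

Definition MN (L : pred word) (x y : word) : Prop :=
  forall z, L (x ++ z) = L (y ++ z).

(* suffix expansion of an equivalence: a_1..a_n ≈ b_1..b_m iff n = m and
   a_i..a_n ~ b_i..b_n for all 1 <= i <= n (suffix from position i = drop (i-1)) *)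
Definition suffix_expansion (sim : word -> word -> Prop) (x y : word) : Prop :=
  size x = size y /\ forall i, i < size x -> sim (drop i x) (drop i y).

Definition approxL (L : pred word) := suffix_expansion (MN L).

Definition words_upto (n : nat) : seq word :=
  flatten [seq [seq tval t | t : k.-tuple Sigma] | k <- iota 0 n.+1].

(* Each word w is mapped to its class (as the sublist of words_upto n that are
   ≈_L-equivalent to w); we count the distinct classes. *)
Definition num_approx_classes (L : pred word) (n : nat) : nat :=
  let W := words_upto n in
  size (undup [seq [seq v <- W | `[< approxL L w v >]] | w <- W]).

Definition in_star (u v w : word) : Prop :=
  exists s : seq bool, w = flatten [seq if b then u else v | b <- s].

Definition critical_tuple (sim : word -> word -> Prop) (u2 v2 u v : word) : Prop :=
  [/\ size u2 = size v2, 0 < size u2,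
      exists u1, u = u1 ++ u2,
      exists v1, v = v1 ++ v2
    & forall w, in_star u v w -> ~ sim (u2 ++ w) (v2 ++ w)].

(* extended alphabet: Some a for a in Sigma, None for the symbol ↓ *)
Definition wnd_step (x : word) (c : option Sigma) : word :=
  match c with
  | Some a => rcons x a
  | None => behead x   (* behead [::] = [::] *)
  end.

Definition wnd (u : seq (option Sigma)) : word := foldl wnd_step [::] u.

(* deterministic (possibly infinite-state) automaton over option Sigma whose
   states are bit strings, with initial state and set of final states *)
Record sw_algorithm := SWAlg {
  sw_init : seq bool;
  sw_delta : seq bool -> option Sigma -> seq bool;
  sw_final : pred (seq bool)
}.

Definition sw_run (A : sw_algorithm) (u : seq (option Sigma)) : seq bool :=
  foldl (sw_delta A) (sw_init A) u.

(* A is a variable-size sliding window algorithm for L: after every prefix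
   (i.e. on every input) it outputs whether the active window is in L *)
Definition is_sw_algorithm (L : pred word) (A : sw_algorithm) : Prop :=
  forall u, sw_final A (sw_run A u) = L (wnd u).

Definition window_bounded (n : nat) (u : seq (option Sigma)) : Prop :=
  forall k, size (wnd (take k u)) <= n.

Definition space_le (A : sw_algorithm) (n s : nat) : Prop :=
  forall u, window_bounded n u -> size (sw_run A u) <= s.

(* V_L(n) <= s : V_L(n) is the space complexity of a space-optimal algorithm,
   i.e. the pointwise minimum over all sliding window algorithms for L of
   their space complexity at n. *)
Definition VL_le (L : pred word) (n s : nat) : Prop :=
  exists A, is_sw_algorithm L A /\ space_le A n s.

Definition VL_in_O_log (L : pred word) : Prop :=
  exists c N, forall n, N <= n -> VL_le L n (c * trunc_log 2 n).

Definition approx_poly_bounded (L : pred word) : Prop :=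
  exists c d, forall n, num_approx_classes L n <= c * n.+1 ^ d.

Definition no_critical_tuple (sim : word -> word -> Prop) : Prop :=
  ~ exists u2 v2 u v, critical_tuple sim u2 v2 u v.

End Defs.

(* Main.v *)
Require Import Defs.
From mathcomp Require Import all_boot.
From mathcomp Require Import boolp.
From mathcomp Require Import zify.
From Stdlib Require Import Lia PArith.
Set Implicit Arguments.
Unset Strict Implicit.
Unset Printing Implicit Defensive.


Section Basic.
Variable Sigma : finType.
Variable L : pred (seq Sigma).

Lemma MN_refl x : MN L x x. Proof. by []. Qed.
Lemma MN_sym x y : MN L x y -> MN L y x. Proof. by move=> h z; rewrite h. Qed.
Lemma MN_trans x y z : MN L x y -> MN L y z -> MN L x z.
Proof. by move=> h1 h2 w; rewrite h1 h2. Qed.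
Lemma MN_cat x y t : MN L x y -> MN L (x ++ t) (y ++ t).
Proof. by move=> h z; rewrite -!catA h. Qed.

Lemma approx_refl x : approxL L x x. Proof. by split. Qed.
Lemma approx_sym x y : approxL L x y -> approxL L y x.
Proof. by case=> hs h; split=> // i hi; apply: MN_sym; apply: h; rewrite hs. Qed.
Lemma approx_trans x y z : approxL L x y -> approxL L y z -> approxL L x z.
Proof.
case=> hs1 h1 [hs2 h2]; split; first by rewrite hs1.
by move=> i hi; apply: MN_trans (h1 _ hi) (h2 _ _); rewrite -hs1.
Qed.

End Basic.

Section DFA.
Variable Sigma : finType.
Variables (Q : finType) (q0 : Q) (delta : Q -> Sigma -> Q) (F : pred Q).
Variable L : pred (seq Sigma).
Hypothesis hL : forall w, L w = F (foldl delta q0 w).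

Definition M := {ffun Q -> Q}.
Definition Tr (w : seq Sigma) : M := [ffun q => foldl delta q w].
Definition st (w : seq Sigma) := foldl delta q0 w.

Lemma TrE w q : Tr w q = foldl delta q w. Proof. by rewrite ffunE. Qed.
Lemma st_cat x y : st (x ++ y) = Tr y (st x).
Proof. by rewrite /st foldl_cat TrE. Qed.
Lemma Tr_cat x y q : Tr (x ++ y) q = Tr y (Tr x q).
Proof. by rewrite !TrE foldl_cat. Qed.
Lemma Tr_cat_eq x x' z z' : Tr x = Tr x' -> Tr z = Tr z' -> Tr (x ++ z) = Tr (x' ++ z').
Proof. by move=> h1 h2; apply/ffunP=> q; rewrite !Tr_cat h1 h2. Qed.
Lemma Tr_nil : Tr [::] = [ffun q => q].
Proof. by apply/ffunP=> q; rewrite !ffunE. Qed.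

Lemma MN_st a b : st a = st b -> MN L a b.
Proof. by move=> h z; rewrite !hL -/(st (a ++ z)) -/(st (b ++ z)) !st_cat h. Qed.

Lemma approx_lcong z a b : approxL L a b -> Tr a = Tr b -> approxL L (z ++ a) (z ++ b).
Proof.
case=> hs h hT; split; first by rewrite !size_cat hs.
move=> i; rewrite size_cat => hi; rewrite !drop_cat.
case: ifP => hiz.
  by apply: MN_st; rewrite !st_cat hT.
by apply: h; rewrite ltn_subLR // leqNgt hiz.
Qed.

Fixpoint wpow (y : seq Sigma) k := if k is k'.+1 then y ++ wpow y k' else [::].

Lemma wpow_add y a b : wpow y (a + b) = wpow y a ++ wpow y b.
Proof. by elim: a => //= a IH; rewrite IH catA. Qed.

Lemma Tr_wpow_abs y t m : Tr (y ++ t) = Tr t -> Tr (wpow y m ++ t) = Tr t.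
Proof.
move=> h; elim: m => //= m IH; rewrite -catA.
by apply/ffunP=> q; rewrite Tr_cat IH -Tr_cat h.
Qed.

Lemma idem_pow y : exists2 k, 0 < k & Tr (wpow y (k + k)) = Tr (wpow y k).
Proof.
pose f (i : 'I_#|M|.+1) := Tr (wpow y i).
have : ~~ injectiveb f.
  apply/negP => /injectiveP inj; have := leq_card f inj.
  by rewrite card_ord ltnn.
case/injectivePn => i [j] hij hf.
have key : forall a b, a < b -> Tr (wpow y a) = Tr (wpow y b) ->
   exists2 k, 0 < k & Tr (wpow y (k + k)) = Tr (wpow y k).
  move=> a b hab he; set p := b - a.
  have hp : 0 < p by rewrite subn_gt0.
  have step : forall c, a <= c -> Tr (wpow y (c + p)) = Tr (wpow y c).
    move=> c hc.
    have [d ->] : exists d, c = a + d by exists (c - a); rewrite subnKC.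
    rewrite -addnA (addnC d p) addnA /p (subnKC (ltnW hab)) !wpow_add.
    by apply: Tr_cat_eq.
  have iter : forall c n, a <= c -> Tr (wpow y (c + n * p)) = Tr (wpow y c).
    move=> c n hc; elim: n => [|n IH]; first by rewrite mul0n addn0.
    by rewrite mulSn (addnC p) addnA step ?IH // (leq_trans hc) // leq_addr.
  exists (a.+1 * p); first by rewrite muln_gt0.
  by rewrite iter // (leq_trans (leqnSn a)) // leq_pmulr.
case: (ltngtP i j) => h.
- by apply: (key i j).
- by apply: (key j i) => //; rewrite -hf.
- by move: hij; rewrite (val_inj h) eqxx.
Qed.

Definition NoCrit := no_critical_tuple (MN L).

Lemma Tr_star X Y s : Tr Y = Tr X -> Tr (X ++ X) = Tr X -> s != [::] ->
  Tr (flatten [seq if b then X else Y | b <- s]) = Tr X.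
Proof.
move=> hY hX; elim: s => //= b s IH _.
case: (eqVneq s [::]) => [-> | hs].
  by rewrite /= cats0; case: b.
rewrite -hX; apply: Tr_cat_eq; last exact: IH.
by case: b.
Qed.

Lemma star_lemma X Y i : NoCrit -> size X = size Y -> Tr X = Tr Y ->
  Tr (X ++ X) = Tr X -> i < size X -> MN L (drop i X ++ X) (drop i Y ++ X).
Proof.
move=> nc hs hT hI hi.
case: (pselect (MN L (drop i X ++ X) (drop i Y ++ X))) => // hn.
exfalso; apply: nc; exists (drop i X), (drop i Y), X, Y; split.
- by rewrite !size_drop hs.
- by rewrite size_drop subn_gt0.
- by exists (take i X); rewrite cat_take_drop.
- by exists (take i Y); rewrite cat_take_drop.
move=> w [s ->] hm; apply: hn.
case: (eqVneq s [::]) hm => [-> | hsn] hm.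
  by move: hm; rewrite /= !cats0 => /MN_cat; apply.
have hw := Tr_star (esym hT) hI hsn.
apply: MN_trans (MN_trans _ hm) _.
  by apply: MN_st; rewrite !st_cat hw.
by apply: MN_st; rewrite !st_cat hw.
Qed.

Lemma ruleR y y' t : NoCrit -> Tr (y ++ t) = Tr t -> size y' = size y -> Tr y' = Tr y ->
  approxL L (y ++ t) (y' ++ t).
Proof.
move=> nc habs hs hT; split; first by rewrite !size_cat hs.
move=> i; rewrite size_cat => hi; rewrite !drop_cat hs.
case: ifP => hiy; last by [].
have [k k0 hk] := idem_pow y.
set X := wpow y k; set Y := y' ++ wpow y k.-1.
have hX : X = y ++ wpow y k.-1 by rewrite /X; case: (k) k0.
have hsXY : size X = size Y by rewrite hX /Y !size_cat hs.
have hTXY : Tr X = Tr Y by rewrite hX /Y; apply: Tr_cat_eq.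
have hI : Tr (X ++ X) = Tr X by rewrite /X -wpow_add.
have hiX : i < size X by rewrite hX size_cat ltn_addr.
have := star_lemma nc hsXY hTXY hI hiX.
rewrite hX /Y !drop_cat hiy hs hiy -hX => /(MN_cat t) h.
have habs' : forall p, st (p ++ t) = st (p ++ (wpow y k.-1 ++ X) ++ t).
  by move=> p; rewrite !st_cat /X -wpow_add Tr_wpow_abs.
apply: MN_trans (MN_trans _ h) _.
  by apply: MN_st; rewrite (habs' (drop i y)) !catA.
by apply: MN_st; rewrite (habs' (drop i y')) !catA.
Qed.

Definition can j (m : M) : seq Sigma :=
  if [pick t : j.-tuple Sigma | Tr t == m] is Some t then tval t else [::].

Lemma can_spec j m y : size y = j -> Tr y = m -> size (can j m) = j /\ Tr (can j m) = m.
Proof.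
move=> hs hT; rewrite /can; case: pickP => [t /eqP ht | hn].
  by rewrite size_tuple.
have hy : size y == j by rewrite hs.
by move: (hn (Tuple hy)); rewrite /= hT eqxx.
Qed.

Fixpoint Canon b k : seq (seq Sigma) :=
  if b is b'.+1 then
    [seq can k m | m <- enum M] ++
    flatten [seq [seq can j p.1 ++ p.2 :: c | p <- enum {: M * Sigma}, c <- Canon b' (k - j.+1)]
            | j <- iota 0 k]
  else [seq can k m | m <- enum M].

Lemma Canon_base b k m : can k m \in Canon b k.
Proof.
have h : can k m \in [seq can k m | m <- enum M] by apply: map_f; rewrite mem_enum.
by case: b => //= b; rewrite mem_cat h.
Qed.

Definition Sset (w : seq Sigma) : {set M} :=
  [set m | [exists i : 'I_(size w).+1, Tr (drop i w) == m]].

Lemma Sset_in w i : i <= size w -> Tr (drop i w) \in Sset w.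
Proof.
move=> hi; rewrite inE; apply/existsP; exists (Ordinal (hi : i < (size w).+1)).
by [].
Qed.

Lemma split_max w : Tr w = Tr [::] \/
  exists y a w', [/\ w = y ++ a :: w', Tr (a :: w') = Tr w & #|Sset w'| < #|Sset w| ].
Proof.
pose P j := (j <= size w) && (Tr (drop j w) == Tr w).
have exP : exists j, P j by exists 0; rewrite /P leq0n drop0 eqxx.
have ubP : forall j, P j -> j <= size w by move=> j /andP[].
case: (ex_maxnP exP ubP) => j0 /andP [hj0 /eqP hTj] hmax.
case: (eqVneq j0 (size w)) => [hj | hj].
  by left; rewrite -hTj hj drop_size.
right.
have hlt : j0 < size w by rewrite ltn_neqAle hj hj0.
case hd : (drop j0 w) => [|a w'].
  by have := size_drop j0 w; rewrite hd => /esym/eqP; rewrite subn_eq0 leqNgt hlt.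
exists (take j0 w), a, w'; split.
- by rewrite -hd cat_take_drop.
- by rewrite -hd.
have hw' : forall i, drop i w' = drop (i + j0.+1) w.
  have e1 : drop j0.+1 w = w' by rewrite -add1n -drop_drop hd /= drop0.
  by move=> i; rewrite -drop_drop e1.
have hsz : size w' = size w - j0.+1.
  by rewrite -[w']drop0 hw' size_drop add0n.
have sub : Sset w' \subset Sset w :\ Tr w.
  apply/subsetP => m; rewrite inE => /existsP [i /eqP <-].
  have hi : i + j0.+1 <= size w by have := ltn_ord i; move: hsz; lia.
  rewrite hw' !inE; apply/andP; split.
    apply/negP => /eqP he.
    have hPi : P (i + j0.+1) by rewrite /P he eqxx andbT.
    by have := hmax _ hPi; lia.
  by have := @Sset_in w (i + j0.+1); rewrite inE; apply.
apply: (leq_ltn_trans (subset_leq_card sub)).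
have := cardsD1 (Tr w) (Sset w).
have -> : Tr w \in Sset w by have := @Sset_in w 0; rewrite drop0; apply.
by move=> ->; rewrite add1n.
Qed.


Lemma Sset_pos w : 0 < #|Sset w|.
Proof. by apply/card_gt0P; exists (Tr (drop 0 w)); apply: Sset_in. Qed.

Lemma decomp : NoCrit -> forall b w, #|Sset w| <= b.+1 ->
  exists2 c, c \in Canon b (size w) & approxL L w c /\ Tr c = Tr w.
Proof.
move=> nc; elim=> [|b IH] w hcard; case: (split_max w) => [hT | [y [a [w' [hw hTa hlt]]]]].
- have [hcs hcT] := can_spec (erefl (size w)) (erefl (Tr w)).
  exists (can (size w) (Tr w)); first exact: Canon_base.
  split => //; have := @ruleR w (can (size w) (Tr w)) [::] nc.
  by rewrite !cats0; apply.
- by have := Sset_pos w'; move: hcard hlt; lia.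
- have [hcs hcT] := can_spec (erefl (size w)) (erefl (Tr w)).
  exists (can (size w) (Tr w)); first exact: Canon_base.
  split => //; have := @ruleR w (can (size w) (Tr w)) [::] nc.
  by rewrite !cats0; apply.
have [c' hc' [hac' hTc']] := IH w' (ltnSE (leq_trans hlt hcard)).
have [hys hyT] := can_spec (erefl (size y)) (erefl (Tr y)).
set y' := can (size y) (Tr y) in hys hyT *.
exists (y' ++ a :: c'); last split.
- rewrite /= mem_cat; apply/orP; right.
  apply/flatten_mapP; exists (size y).
    by rewrite mem_iota add0n hw size_cat /=; lia.
  have -> : size w - (size y).+1 = size w' by rewrite hw size_cat /=; lia.
  have hp : (Tr y, a) \in enum {: M * Sigma} by rewrite mem_enum.
  exact: (allpairs_f (fun (p : M * Sigma) c => can (size y) p.1 ++ p.2 :: c) hp hc').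
- apply: approx_trans (_ : approxL L (y' ++ a :: w') _).
    rewrite hw; apply: ruleR => //.
    by rewrite -hw hTa.
  by rewrite -!cat_rcons; apply: approx_lcong.
rewrite hw; apply: Tr_cat_eq => //.
by apply: (@Tr_cat_eq [:: a] [:: a]).
Qed.

Lemma size_flatten_le (T : Type) (s : seq nat) (f : nat -> seq T) B :
  (forall j, j \in s -> size (f j) <= B) -> size (flatten [seq f j | j <- s]) <= size s * B.
Proof.
elim: s => //= j s IH h; rewrite size_cat mulSn leq_add ?h ?mem_head //.
by apply: IH => i hi; apply: h; rewrite inE hi orbT.
Qed.

Definition Kc := #|M| * #|Sigma|.+1.

Lemma cardM_gt0 : 0 < #|M|.
Proof. by rewrite /M card_ffun expn_gt0; apply/orP; left; apply/card_gt0P; exists q0. Qed.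

Lemma Canon_size b k : size (Canon b k) <= (Kc * k.+1) ^ b.+1.
Proof.
have hM := cardM_gt0.
elim: b k => [|b IH] k.
  by rewrite /= size_map -cardE expn1 /Kc -mulnA leq_pmulr.

rewrite /= size_cat size_map -cardE.
set X := (Kc * k.+1) ^ b.+1.
have hX : 0 < X by rewrite expn_gt0 /Kc; nia.
have hfl : size (flatten [seq [seq can j p.1 ++ p.2 :: c | p <- enum {: M * Sigma},
            c <- Canon b (k - j.+1)] | j <- iota 0 k]) <= k * (#|M| * #|Sigma| * X).
  apply: (leq_trans (size_flatten_le (B := #|M| * #|Sigma| * X) _)); last by rewrite size_iota.
  move=> j _.
  rewrite size_allpairs -cardE card_prod leq_mul2l; apply/orP; right.
  apply: (leq_trans (IH _)); rewrite leq_exp2r // leq_mul2l; apply/orP; right.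
  by rewrite ltnS leq_subr.
apply: (leq_trans (leq_add (leqnn _) hfl)).
rewrite expnS -/X /Kc.
have h1 : #|M| <= #|M| * X by rewrite leq_pmulr.
clear hfl; move: h1 hX; rewrite /X; move: (_ ^ _) #|M| #|Sigma| => x m s0 h1 hX; nia.
Qed.

Lemma words_upto_size n w : w \in words_upto Sigma n -> size w <= n.
Proof.
rewrite /words_upto => /flatten_mapP [k]; rewrite mem_iota add0n => /andP [_ hk].
by case/imageP => t _ ->; rewrite size_tuple -ltnS.
Qed.

Lemma count_classes n (C : seq (seq Sigma)) :
  (forall w, w \in words_upto Sigma n -> exists2 c, c \in C & approxL L w c) ->
  num_approx_classes L n <= size C.
Proof.
move=> hC; rewrite /num_approx_classes.
set W := words_upto Sigma n.
set cls := fun w => [seq v <- W | `[< approxL L w v >]].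
rewrite -(size_map cls C); apply: uniq_leq_size; first exact: undup_uniq.
move=> x; rewrite mem_undup => /mapP [w hw ->].
have [c hc hwc] := hC w hw.
have -> : cls w = cls c.
  apply: eq_filter => v; apply/asboolP/asboolP => h.
    exact: approx_trans (approx_sym hwc) h.
  exact: approx_trans hwc h.
exact: map_f.
Qed.

Lemma nocrit_poly : NoCrit -> approx_poly_bounded L.
Proof.
move=> nc; exists (Kc ^ #|M|.+1), #|M|.+2 => n.
set C := flatten [seq Canon #|M| k | k <- iota 0 n.+1].
apply: (@leq_trans (size C)).
  apply: count_classes => w hw.
  have hs := words_upto_size hw.
  have hc : #|Sset w| <= #|M|.+1 by apply: (leq_trans (max_card _)).
  have [c hc1 [hac _]] := decomp nc hc.
  exists c => //; apply/flatten_mapP; exists (size w) => //.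
  by rewrite mem_iota add0n ltnS.
apply: (leq_trans (size_flatten_le (B := (Kc * n.+1) ^ #|M|.+1) _)).
  move=> k; rewrite mem_iota add0n ltnS => /andP [_ hk].
  apply: (leq_trans (Canon_size _ _)); rewrite leq_exp2r // leq_mul2l ltnS hk orbT //.
by rewrite size_iota expnMn [_ ^ #|M|.+2]expnS mulnCA.
Qed.

End DFA.



Fixpoint p2b (p : positive) : seq bool :=
  match p with xH => [::] | xO p => false :: p2b p | xI p => true :: p2b p end.
Fixpoint b2p (b : seq bool) : positive :=
  match b with [::] => xH | false :: b => xO (b2p b) | true :: b => xI (b2p b) end.
Lemma p2bK p : b2p (p2b p) = p. Proof. by elim: p => //= p ->. Qed.
Lemma p2b_size p : 2 ^ size (p2b p) <= Pos.to_nat p.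
Proof.
elim: p => [p IH|p IH|] /=.
- rewrite Pos2Nat.inj_xI expnS; move: IH; lia.
- rewrite Pos2Nat.inj_xO expnS; move: IH; lia.
- by [].
Qed.
Definition bin (k : nat) := p2b (Pos.of_succ_nat k).
Definition unbin (b : seq bool) := (Pos.to_nat (b2p b)).-1.
Lemma binK k : unbin (bin k) = k.
Proof. by rewrite /unbin /bin p2bK SuccNat2Pos.id_succ. Qed.
Lemma bin_size k : 2 ^ size (bin k) <= k.+1.
Proof. by have := p2b_size (Pos.of_succ_nat k); rewrite SuccNat2Pos.id_succ. Qed.

Section Alg.
Variable Sigma : finType.
Variable L : pred (seq Sigma).

Definition fut (x y : seq Sigma) :=
  forall v : seq (option Sigma), L (foldl (@wnd_step Sigma) x v) = L (foldl (@wnd_step Sigma) y v).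

Lemma approx_step x y c : approxL L x y -> approxL L (wnd_step x c) (wnd_step y c).
Proof.
case=> hs h; case: c => [a|] /=.
  split; first by rewrite !size_rcons hs.
  move=> i; rewrite size_rcons ltnS leq_eqVlt => /orP [/eqP -> | hi].
    have -> : drop (size x) (rcons y a) = [:: a] by rewrite hs drop_rcons // drop_size.
    rewrite drop_rcons // drop_size; exact: MN_refl.
  rewrite drop_rcons; last exact: ltnW.
  rewrite drop_rcons; last by rewrite -hs ltnW.
  by rewrite -!cats1; apply: MN_cat; apply: h.
split; first by rewrite !size_behead hs.
move=> i; rewrite size_behead => hi.
by rewrite -!drop1 !drop_drop; apply: h; move: hi; rewrite addn1 ltn_predRL.
Qed.

Lemma approx_L x y : approxL L x y -> L x = L y.
Proof.
case=> hs h; case: (posnP (size x)) => hx.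
  have ex : x = [::] by apply/eqP; rewrite -size_eq0 hx.
  have ey : y = [::] by apply/eqP; rewrite -size_eq0 -hs hx.
  by rewrite ex ey.
by have := h 0 hx [::]; rewrite !drop0 !cats0.
Qed.

Lemma approx_fut x y : approxL L x y -> fut x y.
Proof.
move=> h v; elim: v x y h => [|c v IH] x y h /=; first exact: approx_L.
by apply: IH; apply: approx_step.
Qed.

Lemma fut_refl x : fut x x. Proof. by []. Qed.
Lemma fut_sym x y : fut x y -> fut y x. Proof. by move=> h v; rewrite h. Qed.
Lemma fut_trans x y z : fut x y -> fut y z -> fut x z.
Proof. by move=> h1 h2 v; rewrite h1 h2. Qed.
Lemma fut_step x y c : fut x y -> fut (wnd_step x c) (wnd_step y c).
Proof. by move=> h v; apply: (h (c :: v)). Qed.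

Variable n : nat.
Let W := words_upto Sigma n.
Definition rep (w : seq Sigma) := nth [::] W (find (fun v => `[< approxL L w v >]) W).

Lemma mem_words_upto w : size w <= n -> w \in W.
Proof.
move=> hw; apply/flatten_mapP; exists (size w); first by rewrite mem_iota add0n ltnS.
have hs : size w == size w by [].
by apply/imageP; exists (Tuple hs).
Qed.

Lemma rep_spec w : size w <= n -> rep w \in W /\ approxL L w (rep w).
Proof.
move=> hw; have hW := mem_words_upto hw.
have hh : has (fun v => `[< approxL L w v >]) W.
  by apply/hasP; exists w => //; apply/asboolP; apply: approx_refl.
split; first by rewrite /rep mem_nth // -has_find.
by apply/asboolP; apply: (nth_find [::] hh).
Qed.

Lemma rep_eq x y : approxL L x y -> rep x = rep y.
Proof.
move=> h; rewrite /rep; congr (nth _ _ _); apply: eq_find => v.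
apply/asboolP/asboolP => h'.
  exact: approx_trans (approx_sym h) h'.
exact: approx_trans h h'.
Qed.

Definition Rl := undup [seq rep w | w <- W].

Lemma undup_map_le (T U V : eqType) (s : seq T) (f : T -> U) (g : T -> V) :
  {in s &, forall x y, g x = g y -> f x = f y} ->
  size (undup (map f s)) <= size (undup (map g s)).
Proof.
elim: s => //= x s IH h.
have h' : {in s &, forall x y, g x = g y -> f x = f y}.
  by move=> a b ha hb; apply: h; rewrite inE ?ha ?hb orbT.
case: ifP => hf; case: ifP => hg /=.
- exact: IH.
- exact: leqW (IH h').
- exfalso; move: hg => /mapP [y hy hxy].
  by move: hf; rewrite (h x y) ?mem_head ?inE ?hy ?orbT // map_f.
- exact: IH.
Qed.

Lemma Rl_size : size Rl <= num_approx_classes L n.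
Proof.
rewrite /Rl /num_approx_classes -/W; apply: undup_map_le => x y hx hy he.
apply: rep_eq.
have : y \in [seq v <- W | `[< approxL L y v >]] by rewrite mem_filter hy andbT; apply/asboolP; apply: approx_refl.
by rewrite -he mem_filter => /andP [/asboolP h _].
Qed.

Definition enc (x : seq Sigma) : seq bool :=
  if size x <= n then false :: bin (index (rep x) Rl) else true :: nseq (pickle x) true.
Definition dec (s : seq bool) : seq Sigma :=
  match s with
  | false :: b => nth [::] Rl (unbin b)
  | true :: b => odflt [::] (unpickle (size b))
  | [::] => [::]
  end.

Lemma dec_true b : dec (true :: b) = odflt [::] (unpickle (size b)). Proof. by []. Qed.
Lemma dec_false b : dec (false :: b) = nth [::] Rl (unbin b). Proof. by []. Qed.

Lemma dec_enc x : size (dec (enc x)) = size x /\ fut (dec (enc x)) x.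
Proof.
rewrite /enc; case: ifP => hx.
  have [hW ha] := rep_spec hx.
  have hR : rep x \in Rl by rewrite mem_undup; apply: map_f; exact: mem_words_upto.
  rewrite dec_false binK nth_index //; split; first by case: ha => ->.
  by apply: fut_sym; apply: approx_fut.
by rewrite dec_true size_nseq pickleK.
Qed.

Definition Alg : sw_algorithm Sigma := SWAlg (enc [::]) (fun s (c : option Sigma) => enc (wnd_step (dec s) c)) (fun s => L (dec s)).

Lemma run_rcons u c : sw_run Alg (rcons u c) = enc (wnd_step (dec (sw_run Alg u)) c).
Proof. by rewrite /sw_run foldl_rcons. Qed.
Lemma run_nil : sw_run Alg [::] = enc [::].
Proof. by []. Qed.
Lemma wnd_rcons (u : seq (option Sigma)) c : wnd (rcons u c) = wnd_step (wnd u) c.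
Proof. by rewrite /wnd foldl_rcons. Qed.

Lemma Alg_inv u : size (dec (sw_run Alg u)) = size (wnd u) /\ fut (dec (sw_run Alg u)) (wnd u).
Proof.
elim/last_ind: u => [|u c [IHs IHf]]; first by rewrite run_nil; exact: dec_enc.
rewrite run_rcons wnd_rcons.
have [h1 h2] := dec_enc (wnd_step (dec (sw_run Alg u)) c).
split.
  rewrite h1; case: c {h1 h2} => [a|]; first by rewrite !size_rcons IHs.
  by rewrite !size_behead IHs.
by apply: fut_trans h2 _; apply: fut_step.
Qed.

Lemma Alg_correct : is_sw_algorithm L Alg.
Proof. by move=> u; have [_ h] := Alg_inv u; apply: (h [::]). Qed.

Lemma enc_size x : size x <= n -> 2 ^ (size (enc x)).-1 <= num_approx_classes L n.
Proof.
move=> hx; rewrite /enc hx.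
apply: (leq_trans (bin_size _)); apply: leq_trans (Rl_size).
rewrite index_mem mem_undup; apply: map_f; exact: mem_words_upto.
Qed.

Lemma Alg_space u : window_bounded n u -> 2 ^ (size (sw_run Alg u)).-1 <= num_approx_classes L n.
Proof.
move=> hb; have hw : size (wnd u) <= n by have := hb (size u); rewrite take_size.
case/lastP: u hb hw => [|u c] hb hw; first by rewrite run_nil; exact: enc_size.
rewrite run_rcons; apply: enc_size.
have [h1 _] := Alg_inv (rcons u c).
have [h2 _] := dec_enc (wnd_step (dec (sw_run Alg u)) c).
by rewrite -h2 -run_rcons h1.
Qed.

End Alg.



Lemma exp_mono a b e : a <= b -> a ^ e <= b ^ e.
Proof. by move=> h; elim: e => // e IH; rewrite !expnS leq_mul. Qed.

Section Parts.
Variable Sigma : finType.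
Variable L : pred (seq Sigma).

Lemma poly_VL : approx_poly_bounded L -> VL_in_O_log L.
Proof.
case=> c [d hcd]; exists (1 + c + 2 * d), 2 => n hn.
exists (Alg L n); split; first exact: Alg_correct.
move=> u hu; have h1 := leq_trans (Alg_space L hu) (hcd n).
set t := trunc_log 2 n; set s := size (sw_run (Alg L n) u) in h1 *.
have ht : 0 < t by rewrite /t trunc_log_gt0 /=; lia.
have hn1 : n.+1 <= 2 ^ t.+1 by apply: trunc_log_ltn.
have hc : c <= 2 ^ c by apply: ltnW; apply: ltn_expl.
have h2 : 2 ^ s.-1 <= 2 ^ (c + t.+1 * d).
  apply: (leq_trans h1); rewrite expnD; apply: leq_mul => //.
  rewrite expnM; exact: exp_mono.
rewrite leq_exp2l // in h2.
move: h2 ht; clear; nia.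
Qed.

Lemma wnd_cat (p q : seq (option Sigma)) : wnd (p ++ q) = foldl (@wnd_step Sigma) (wnd p) q.
Proof. by rewrite /wnd foldl_cat. Qed.
Lemma fold_some (x z : seq Sigma) : foldl (@wnd_step Sigma) x (map Some z) = x ++ z.
Proof. by elim: z x => [|a z IH] x /=; [rewrite cats0 | rewrite IH cat_rcons]. Qed.
Lemma fold_none (x : seq Sigma) i : foldl (@wnd_step Sigma) x (nseq i None) = drop i x.
Proof. by elim: i x => [|i IH] x /=; [rewrite drop0 | rewrite IH -drop1 drop_drop addn1]. Qed.
Lemma wnd_some (z : seq Sigma) : wnd (map Some z) = z.
Proof. by rewrite /wnd fold_some. Qed.
Lemma run_cat (A : sw_algorithm Sigma) p q : sw_run A (p ++ q) = foldl (sw_delta A) (sw_run A p) q.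
Proof. by rewrite /sw_run foldl_cat. Qed.

Lemma alg_approx A x y : is_sw_algorithm L A -> size x = size y ->
  sw_run A (map Some x) = sw_run A (map Some y) -> approxL L x y.
Proof.
move=> hA hs hr; split => // i hi z.
pose r := nseq i None ++ map Some z.
have ew : forall w : seq Sigma, wnd (map Some w ++ r) = drop i w ++ z.
  by move=> w; rewrite wnd_cat wnd_some /r foldl_cat fold_none fold_some.
by rewrite -!ew -!hA !run_cat hr.
Qed.

Lemma window_bounded_some n (w : seq Sigma) : size w <= n -> window_bounded n (map Some w).
Proof.
move=> hw k; rewrite -map_take wnd_some size_take_min.
exact: leq_trans (geq_minr _ _) hw.
Qed.

Lemma count_alg A n s : is_sw_algorithm L A -> space_le A n s ->
  num_approx_classes L n <= n.+1 * (s.+1 * 2 ^ s).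
Proof.
move=> hA hsp; rewrite /num_approx_classes.
set W := words_upto Sigma n.
set cls := fun w => [seq v <- W | `[< approxL L w v >]].
pose g := fun w : seq Sigma => (size w, sw_run A (map Some w)).
apply: (@leq_trans (size (undup (map g W)))).
  apply: undup_map_le => x y hx hy [hs hr].
  have hxy := alg_approx hA hs hr.
  apply: eq_filter => v; apply/asboolP/asboolP => h.
    exact: approx_trans (approx_sym hxy) h.
  exact: approx_trans hxy h.
pose Cand := [seq (k, b) | k <- iota 0 n.+1, b <- words_upto bool s].
apply: (@leq_trans (size Cand)).
  apply: uniq_leq_size; first exact: undup_uniq.
  move=> p; rewrite mem_undup => /mapP [w hw ->]; rewrite /g.
  have hsw := words_upto_size hw.
  apply: allpairs_f; first by rewrite mem_iota add0n ltnS.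
  apply: mem_words_upto; apply: hsp; exact: window_bounded_some.
rewrite size_allpairs size_iota leq_mul2l; apply/orP; right.
apply: (leq_trans (size_flatten_le (B := 2 ^ s) _)); first last.
  by rewrite size_iota.
move=> k; rewrite mem_iota add0n ltnS => /andP [_ hk].
by rewrite size_image card_tuple card_bool leq_pexp2l.
Qed.

Lemma num_le_size n : num_approx_classes L n <= n.+1 * #|Sigma|.+1 ^ n.
Proof.
rewrite /num_approx_classes; apply: (leq_trans (size_undup _)); rewrite size_map.
rewrite /words_upto; apply: (leq_trans (size_flatten_le (B := #|Sigma|.+1 ^ n) _)); first last.
  by rewrite size_iota.
move=> k; rewrite mem_iota add0n ltnS => /andP [_ hk].
rewrite size_image card_tuple; apply: (@leq_trans (#|Sigma|.+1 ^ k)).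
  exact: exp_mono.
by rewrite leq_pexp2l.
Qed.

Lemma VL_poly : VL_in_O_log L -> approx_poly_bounded L.
Proof.
case=> c [N h].
pose B0 := N.+1 * #|Sigma|.+1 ^ N.
exists (B0 + 2), (c.*2.+1) => n.
have hpos : 0 < n.+1 ^ c.*2.+1 by rewrite expn_gt0.
case: (ltnP n N) => hn.
  apply: (leq_trans (num_le_size n)); apply: (@leq_trans B0).
    by apply: leq_mul; rewrite ?ltnS ?leq_pexp2l // ltnW.
  by apply: (@leq_trans (B0 + 2)); rewrite ?leq_addr // leq_pmulr.
have [A [hA hsp]] := h n hn.
apply: (leq_trans (count_alg hA hsp)).
have h2t : 2 ^ trunc_log 2 n <= n.+1.
  case: (posnP n) => [-> | hn0]; first by rewrite trunc_log0.
  by apply: leqW; apply: trunc_logP.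
set t := trunc_log 2 n in h2t *.
have hs : (c * t).+1 <= 2 ^ (c * t) by apply: ltn_expl.
apply: (@leq_trans (n.+1 ^ c.*2.+1)); last by rewrite leq_pmull // addn2.
rewrite expnS leq_mul2l; apply/orP; right.
apply: (@leq_trans (2 ^ (c * t) * 2 ^ (c * t))); first by rewrite leq_mul2r hs orbT.
rewrite -expnD addnn doubleMl mulnC expnM.
by apply: exp_mono.
Qed.

Section Crit.
Variables u2 v2 u v : seq Sigma.
Hypothesis hc : critical_tuple (MN L) u2 v2 u v.

Definition blk (b : bool) := if b then u ++ v else v ++ u.
Definition wordb (bs : seq bool) := flatten (map blk bs).

Lemma size_blk b : size (blk b) = size u + size v.
Proof. by case: b; rewrite /= size_cat // addnC. Qed.
Lemma size_wordb bs : size (wordb bs) = size bs * (size u + size v).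
Proof. by elim: bs => //= b bs IH; rewrite size_cat IH size_blk mulSn. Qed.
Lemma wordb_rcons bs x : wordb (rcons bs x) = wordb bs ++ blk x.
Proof. by rewrite /wordb -cats1 map_cat flatten_cat /= cats0. Qed.

Lemma in_star_blk W x : in_star u v W -> in_star u v (W ++ blk x).
Proof.
case=> s ->; exists (s ++ [:: x; ~~ x]).
by rewrite map_cat flatten_cat /=; case: x; rewrite /= cats0.
Qed.

Lemma drop_suffix (p s2 : seq Sigma) : drop (size (p ++ s2) - size s2) (p ++ s2) = s2.
Proof. by rewrite size_cat addnK drop_size_cat. Qed.

Lemma drop_lt (s : seq Sigma) i l : drop i s = l -> 0 < size l -> i < size s.
Proof. by move=> <-; rewrite size_drop subn_gt0. Qed.

Lemma key_diff bs bs' : size bs = size bs' -> bs != bs' ->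
  exists i W, in_star u v W /\
   ((drop i (wordb bs) = u2 ++ W /\ drop i (wordb bs') = v2 ++ W) \/
    (drop i (wordb bs) = v2 ++ W /\ drop i (wordb bs') = u2 ++ W)).
Proof.
case: hc => hs02 hpos [u1 hu] [v1 hv] _.
elim/last_ind: bs bs' => [|bs x IH] bs' hs hne.
  by case: bs' hs hne.
case/lastP: bs' hs hne => [|bs' x']; first by rewrite size_rcons.
rewrite !size_rcons => /eqP; rewrite eqSS => /eqP hs hne.
have hws : size (wordb bs) = size (wordb bs') by rewrite !size_wordb hs.
case: (eqVneq x x') => hx.
  have hne' : bs != bs' by apply: contraNneq hne => ->; rewrite hx.
  have [i [W [hW hd]]] := IH bs' hs hne'.
  have hu2 : 0 < size (u2 ++ W) by rewrite size_cat ltn_addr.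
  have hv2 : 0 < size (v2 ++ W) by rewrite size_cat -hs02 ltn_addr.
  exists i, (W ++ blk x); split; first exact: in_star_blk.
  rewrite !wordb_rcons -hx !drop_cat.
  case: hd => [[h1 h2] | [h1 h2]].
  - rewrite (drop_lt h1 hu2) -hws (drop_lt h1 hu2) h1 h2 -!catA.
    by left.
  - rewrite (drop_lt h1 hv2) -hws (drop_lt h1 hv2) h1 h2 -!catA.
    by right.
exists (size (wordb bs) + (size u + size v - size u2)), [::]; split.
  by exists [::].
rewrite !wordb_rcons !drop_cat -hws !ltnNge !leq_addr /= !addKn !cats0.
have e1 : size u + size v - size u2 = size (u ++ v) - size v2 by rewrite size_cat hs02.
have e2 : size u + size v - size u2 = size (v ++ u) - size u2 by rewrite size_cat addnC.
case: x x' hx hne => [] [] // _ _ /=.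
  right; split.
    by rewrite e1 hv catA drop_suffix.
  by rewrite e2 hu catA drop_suffix.
left; split.
  by rewrite e2 hu catA drop_suffix.
by rewrite e1 hv catA drop_suffix.
Qed.

Lemma wordb_not_approx bs bs' : size bs = size bs' -> bs != bs' ->
  ~ approxL L (wordb bs) (wordb bs').
Proof.
move=> hs hne [_ ha].
have [i [W [hW hd]]] := key_diff hs hne.
case: hc => hs02 hpos _ _ hcr.
case: hd => [[h1 h2] | [h1 h2]].
- have hi : i < size (wordb bs) by apply: (drop_lt h1); rewrite size_cat ltn_addr.
  by apply: (hcr W hW); rewrite -h1 -h2; apply: ha.
- have hi : i < size (wordb bs) by apply: (drop_lt h1); rewrite size_cat -hs02 ltn_addr.
  by apply: (hcr W hW); apply: MN_sym; rewrite -h1 -h2; apply: ha.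
Qed.

Lemma crit_count m : 2 ^ m <= num_approx_classes L (m * (size u + size v)).
Proof.
rewrite /num_approx_classes.
set W := words_upto Sigma _.
set cls := fun w => [seq v0 <- W | `[< approxL L w v0 >]].
pose h := fun t : m.-tuple bool => cls (wordb t).
have hW : forall t : m.-tuple bool, wordb t \in W.
  by move=> t; apply: mem_words_upto; rewrite size_wordb size_tuple.
have hinj : injective h.
  move=> t t' he; apply/eqP; apply/negPn/negP => hne.
  have : wordb t \in h t by rewrite /h /cls mem_filter hW andbT; apply/asboolP; apply: approx_refl.
  rewrite he /h /cls mem_filter => /andP [/asboolP ha _].
  apply: (@wordb_not_approx t' t); first by rewrite !size_tuple.
    by rewrite eq_sym.
  exact: ha.
have -> : 2 ^ m = size (map h (enum {: m.-tuple bool})).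
  by rewrite size_map -cardE card_tuple card_bool.
apply: uniq_leq_size; first by rewrite map_inj_uniq // enum_uniq.
move=> x /mapP [t _ ->]; rewrite mem_undup; exact: map_f.
Qed.

End Crit.

Lemma exp_beats a b : exists j, a + b * j < 2 ^ j.
Proof.
set t := a + b.*2.
exists t.*2.
have h1 : t < 2 ^ t by apply: ltn_expl.
have h2 : 2 ^ t.*2 = 2 ^ t * 2 ^ t by rewrite -addnn expnD.
rewrite h2; move: h1; move: (2 ^ t) => p hp.
have ht : b.*2 <= t by rewrite /t leq_addl.
have ha : a <= t by rewrite /t leq_addr.
clearbody t. 
have : b * t.*2 <= t * t by rewrite -doubleMr doubleMl leq_mul2r ht orbT.
have : t.+1 * t.+1 <= p * p by rewrite leq_mul.
lia.
Qed.

Lemma crit_not_poly u2 v2 u v : critical_tuple (MN L) u2 v2 u v -> ~ approx_poly_bounded L.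
Proof.
move=> hc [c [d hcd]].
have [j hj] := exp_beats (c + (size u + size v).+1 * d) d.
have h1 := leq_trans (crit_count hc (2 ^ j)) (hcd _).
move: h1 hj; move: (size u + size v) => K h1 hj.
have h2 : (2 ^ j * K).+1 <= 2 ^ (K.+1 + j).
  have hK : K.+1 <= 2 ^ K.+1 by apply: ltnW; apply: ltn_expl.
  have hm : 0 < 2 ^ j by rewrite expn_gt0.
  apply: (@leq_trans (K.+1 * 2 ^ j)); last by rewrite expnD leq_mul2r hK orbT.
  move: hm; move: (2 ^ j) => m hm; clear -hm; nia.
move: h1 h2 hj; move: (2 ^ j) => m h1 h2 hj.
have h3 : c * (m * K).+1 ^ d <= 2 ^ (c + K.+1 * d + d * j).
  rewrite -addnA expnD; apply: leq_mul; first by apply: ltnW; apply: ltn_expl.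
  rewrite [d * j]mulnC -mulnDl expnM; exact: exp_mono h2.
have h4 : 2 ^ (c + K.+1 * d + d * j) < 2 ^ m by rewrite ltn_exp2l.
by have := leq_ltn_trans (leq_trans h1 h3) h4; rewrite ltnn.
Qed.


End Parts.

Theorem theorem16 (Sigma : finType) (L : pred (seq Sigma)) :
  regular L ->
  [<-> VL_in_O_log L;
       approx_poly_bounded L;
       no_critical_tuple (MN L)].
Proof.
case=> Q [q0 [delta [F hL]]].
tfae.
- exact: VL_poly.
- by move=> hp [u2 [v2 [u [v hc]]]]; exact: (crit_not_poly hc hp).
- move=> nc; apply: poly_VL; exact: (nocrit_poly hL nc).
Qed.
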